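(* Let $\mathcal{M}_{\hat A'\hat B'\to\hat A\hat B}$ be a bipartite quantum channel and $\Theta^{\mathrm{PPT}}$ a completely-PPT-preserving superchannel, $\Theta^{\mathrm{PPT}}(\mathcal{M})=\mathcal{P}^{\mathrm{post}}_{A_M\hat A\hat BB_M\to AB}\circ\mathcal{M}\circ\mathcal{P}^{\mathrm{pre}}_{A'B'\to\hat A'\hat B'A_MB_M}$ with $\mathcal{P}^{\mathrm{pre}},\mathcal{P}^{\mathrm{post}}$ completely PPT-preserving channels. Then $$E_\kappa(\mathcal{M})\ge E_\kappa(\Theta^{\mathrm{PPT}}(\mathcal{M})).$$
   Context: $T_X$ is partial transpose on $X$. For a bipartite channel $\mathcal{N}_{A'B'\to AB}$ (Alice: $A',A$; Bob: $B',B$), its Choi operator is $J^{\mathcal{N}}_{L_AABL_B}=\mathcal{N}(|\Upsilon\rangle\langle\Upsilon|_{L_AA'}\otimes|\Upsilon\rangle\langle\Upsilon|_{B'L_B})$ with $|\Upsilon\rangle_{XY}=\sum_i|i\rangle_X|i\rangle_Y$, $L_A\simeq A'$, $L_B\simeq B'$. The $\kappa$-entanglement of $\mathcal{N}$ is $E_\kappa(\mathcal{N})=\log\Gamma_\kappa(\mathcal{N})$, where $\Gamma_\kappa(\mathcal{N})=\inf\{\|\operatorname{Tr}_{AB}Q_{L_AABL_B}\|_\infty: Q_{L_AABL_B}\ge0,\ -T_{BL_B}(Q_{L_AABL_B})\le T_{BL_B}(J^{\mathcal{N}}_{L_AABL_B})\le T_{BL_B}(Q_{L_AABL_B})\}$.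 A bipartite channel is completely PPT-preserving if conjugating it with partial transposes on Bob's input and output systems gives a completely positive map. In the superchannel, Alice holds $A',\hat A',A_M,\hat A,A$; Bob holds $B',\hat B',B_M,\hat B,B$. *)

(* Defs.v *)
(* Composite systems are
   indexed by product types. *)
From HB Require Import structures.
From mathcomp Require Import all_boot all_order all_algebra.
Set Implicit Arguments. Unset Strict Implicit. Unset Printing Implicit Defensive.
Import Order.TTheory GRing.Theory Num.Theory.
Local Open Scope ring_scope.

Section QDefs.
Variable C : numClosedFieldType.

Definition op (X : finType) := X -> X -> C.

Definition superop (X Y : finType) := op X -> op Y.

Definition psd (X : finType) (A : op X) : Prop :=
  forall v : X -> C, 0 <= \sum_(x : X) \sum_(y : X) Num.conj (v x) * A x y * v y.

Definition loewner_le (X : finType) (A B : op X) : Prop :=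
  psd (fun x y => B x y - A x y).

Definition opp_op (X : finType) (A : op X) : op X := fun x y => - A x y.

Definition scal_id (X : finType) (t : C) : op X :=
  fun x y => if x == y then t else 0.

Definition trace (X : finType) (A : op X) : C := \sum_(x : X) A x x.

Definition linear_superop (X Y : finType) (N : superop X Y) : Prop :=
  forall (a : C) (A B : op X),
    N (fun x y => a * A x y + B x y) = (fun x y => a * N A x y + N B x y).

(* id_R (x) N *)
Definition ampl (R X Y : finType) (N : superop X Y) : superop (R * X)%type (R * Y)%type :=
  fun Z p q => N (fun i j => Z (p.1, i) (q.1, j)) p.2 q.2.

Definition completely_positive (X Y : finType) (N : superop X Y) : Prop :=
  forall (R : finType) (Z : op (R * X)%type), psd Z -> psd (ampl (R:=R) N Z).

Definition trace_preserving (X Y : finType) (N : superop X Y) : Prop :=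
  forall A : op X, trace (N A) = trace A.

Definition channel (X Y : finType) (N : superop X Y) : Prop :=
  [/\ linear_superop N, completely_positive N & trace_preserving N].

Definition ptB (XA XB : finType) (A : op (XA * XB)%type) : op (XA * XB)%type :=
  fun p q => A (p.1, q.2) (q.1, p.2).

Definition completely_PPT_preserving (XA' XB' XA XB : finType)
    (N : superop (XA' * XB')%type (XA * XB)%type) : Prop :=
  channel N /\ completely_positive (fun Z => ptB (N (ptB Z))).

(* id_{A_M} (x) M (x) id_{B_M}, acting on (Ahat' A_M)(Bhat' B_M) *)
Definition mid_action (Ahi Bhi Aho Bho Am Bm : finType)
    (M : superop (Ahi * Bhi)%type (Aho * Bho)%type) :
    superop ((Ahi * Am) * (Bhi * Bm))%type ((Aho * Am) * (Bho * Bm))%type :=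
  fun W p q =>
    M (fun u v => W ((u.1, p.1.2), (u.2, p.2.2)) ((v.1, q.1.2), (v.2, q.2.2)))
      (p.1.1, p.2.1) (q.1.1, q.2.1).

Definition superchannel_apply (Ai Bi Ahi Bhi Am Bm Aho Bho Ao Bo : finType)
    (Pre : superop (Ai * Bi)%type ((Ahi * Am) * (Bhi * Bm))%type)
    (Post : superop ((Aho * Am) * (Bho * Bm))%type (Ao * Bo)%type)
    (M : superop (Ahi * Bhi)%type (Aho * Bho)%type) : superop (Ai * Bi)%type (Ao * Bo)%type :=
  fun Z => Post (mid_action M (Pre Z)).

(* Choi operator J_{L_A A B L_B}, indexed by (L_A * A) * (B * L_B),
   with L_A = A', L_B = B', unnormalized maximally entangled vectors *)
Definition choi (XA' XB' XA XB : finType) (N : superop (XA' * XB')%type (XA * XB)%type) :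
    op ((XA' * XA) * (XB * XB'))%type :=
  fun p q =>
    N (fun u v => if (u == (p.1.1, p.2.2)) && (v == (q.1.1, q.2.2)) then 1 else 0)
      (p.1.2, p.2.1) (q.1.2, q.2.1).

Definition trAB (XA' XB' XA XB : finType) (Q : op ((XA' * XA) * (XB * XB'))%type) :
    op (XA' * XB')%type :=
  fun p q => \sum_(a : XA) \sum_(b : XB) Q ((p.1, a), (b, p.2)) ((q.1, a), (b, q.2)).

(* feasible Q in the SDP defining Gamma_kappa; ptB here is T_{B L_B} *)
Definition kappa_feasible (XA' XB' XA XB : finType)
    (N : superop (XA' * XB')%type (XA * XB)%type) (Q : op ((XA' * XA) * (XB * XB'))%type) : Prop :=
  [/\ psd Q,
      loewner_le (opp_op (ptB Q)) (ptB (choi N))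
    & loewner_le (ptB (choi N)) (ptB Q)].

(* Values t >= ||Tr_AB Q||_inf for some feasible Q.  For PSD X,
   ||X||_inf = min { t | X <= t 1 }, so Gamma_kappa(N) = inf kappa_vals N. *)
Definition kappa_vals (XA' XB' XA XB : finType)
    (N : superop (XA' * XB')%type (XA * XB)%type) (t : C) : Prop :=
  exists Q, kappa_feasible N Q /\ loewner_le (trAB Q) (scal_id (X := (XA' * XB')%type) t).

Definition lower_bound (S : C -> Prop) (r : C) : Prop :=
  forall t, S t -> r <= t.

(* Gamma_kappa(N1) >= Gamma_kappa(N2), i.e. inf kappa_vals N1 >= inf kappa_vals N2,
   expressed as inclusion of the sets of lower bounds (no completeness of C needed) *)
Definition Gamma_kappa_ge (XA' XB' XA XB YA' YB' YA YB : finType)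
    (N1 : superop (XA' * XB')%type (XA * XB)%type) (N2 : superop (YA' * YB')%type (YA * YB)%type) : Prop :=
  forall r, lower_bound (kappa_vals N2) r -> lower_bound (kappa_vals N1) r.

End QDefs.

(* Main.v *)
Require Import Defs.
From HB Require Import structures.
From mathcomp Require Import all_boot all_order all_algebra.
From mathcomp Require Import ring.
From Stdlib Require Import FunctionalExtensionality.
Set Implicit Arguments. Unset Strict Implicit. Unset Printing Implicit Defensive.
Import Order.TTheory GRing.Theory Num.Theory.
Local Open Scope ring_scope.

Section Q.
Variable C : numClosedFieldType.

Definition bf (X : finType) (A : op C X) (u w : X -> C) : C :=
  \sum_x \sum_y (u x)^* * A x y * w y.

Definition delta (X : finType) (x : X) : X -> C := fun z => if z == x then 1 else 0.

Lemma bfDl (X : finType) (A : op C X) u1 u2 w :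
  bf A (fun z => u1 z + u2 z) w = bf A u1 w + bf A u2 w.
Proof.
rewrite /bf -big_split /=; apply: eq_bigr => x _.
rewrite -big_split /=; apply: eq_bigr => y _.
by rewrite rmorphD /= !mulrDl.
Qed.

Lemma bfDr (X : finType) (A : op C X) u w1 w2 :
  bf A u (fun z => w1 z + w2 z) = bf A u w1 + bf A u w2.
Proof.
rewrite /bf -big_split /=; apply: eq_bigr => x _.
rewrite -big_split /=; apply: eq_bigr => y _.
by rewrite !mulrDr.
Qed.

Lemma bfZl (X : finType) (A : op C X) s u w :
  bf A (fun z => s * u z) w = s^* * bf A u w.
Proof.
rewrite /bf big_distrr; apply: eq_bigr => x _.
rewrite big_distrr; apply: eq_bigr => y _.
by rewrite rmorphM /= !mulrA.
Qed.

Lemma bfZr (X : finType) (A : op C X) s u w :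
  bf A u (fun z => s * w z) = s * bf A u w.
Proof.
rewrite /bf big_distrr; apply: eq_bigr => x _.
rewrite big_distrr; apply: eq_bigr => y _.
by rewrite mulrCA.
Qed.

Lemma sum_delta (X : finType) (x : X) (F : X -> C) :
  \sum_z (if z == x then F z else 0) = F x.
Proof.
rewrite (bigD1 x) //= eqxx big1 ?addr0 // => z zx.
by rewrite (negbTE zx).
Qed.

Lemma bf_dl (X : finType) (A : op C X) x w :
  bf A (delta x) w = \sum_y A x y * w y.
Proof.
rewrite /bf -(sum_delta x (fun x => \sum_y A x y * w y)).
apply: eq_bigr => z _; rewrite /delta; case: (z == x).
  by apply: eq_bigr => y _; rewrite rmorph1 mul1r.
by apply: big1 => y _; rewrite rmorph0 !mul0r.
Qed.

Lemma bf_dr (X : finType) (A : op C X) u y :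
  bf A u (delta y) = \sum_x (u x)^* * A x y.
Proof.
rewrite /bf; apply: eq_bigr => x _.
rewrite -(sum_delta y (fun y => (u x)^* * A x y)).
by apply: eq_bigr => z _; rewrite /delta; case: (z == y); rewrite ?mulr1 ?mulr0.
Qed.

Lemma bf_dd (X : finType) (A : op C X) x y : bf A (delta x) (delta y) = A x y.
Proof.
rewrite bf_dl -(sum_delta y (fun y => A x y)).
by apply: eq_bigr => z _; rewrite /delta; case: (z == y); rewrite ?mulr1 ?mulr0.
Qed.

Lemma psd_diag (X : finType) (A : op C X) x : psd A -> 0 <= A x x.
Proof. by move=> h; have := h (delta x); rewrite -/(bf A _ _) bf_dd. Qed.

Lemma psd_herm (X : finType) (A : op C X) x y : psd A -> A y x = (A x y)^*.
Proof.
move=> h.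
have key c : 0 <= A x x + c * A x y + (c^* * A y x + c^* * (c * A y y)).
  have := h (fun z => delta x z + c * delta y z); rewrite -/(bf A _ _).
  by rewrite !bfDl !bfDr !bfZl !bfZr !bf_dd.
have rx := geC0_conj (psd_diag x h).
have ry := geC0_conj (psd_diag y h).
have e1 := geC0_conj (key 1).
have e2 := geC0_conj (key 'i).
rewrite !rmorphD !rmorphM /= !conjCK conjC1 rx ry in e1 e2.
rewrite conjCi in e2.
have hi : 'i * 'i = -1 :> C by rewrite -expr2 sqrCi.
set s := A x y in e1 e2 *; set r := A y x in e1 e2 *.
move: e1 e2.
set L1 := (X in X = _ -> _); set R1 := (X in _ = X -> _).
set L2 := (X in _ -> X = _ -> _); set R2 := (X in _ -> _ = X -> _).
move=> e1 e2.
have H : (r - s^*) *+ 2 = (R1 - L1) + 'i * (R2 - L2) - ('i*'i + 1) * (s - r + s^* - r^*).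
  rewrite /L1 /R1 /L2 /R2. ring.
move: H; rewrite e1 e2 hi !subrr mulr0 addNr mul0r subr0 add0r.
move/eqP; rewrite mulrn_eq0 /= subr_eq0 => /eqP.
done.
Qed.

Lemma bf_conj (X : finType) (A : op C X) u w : psd A -> bf A u w = (bf A w u)^*.
Proof.
move=> h; rewrite /bf rmorph_sum exchange_big /=; apply: eq_bigr => y _.
rewrite rmorph_sum; apply: eq_bigr => x _.
by rewrite !rmorphM /= conjCK -(psd_herm _ _ h); ring.
Qed.

Lemma bf_rank1 (X : finType) (A : op C X) a x0 v :
  bf (fun x y => A x y - a * (A x x0 * A x0 y)) v v =
  bf A v v - a * (bf A v (delta x0) * bf A (delta x0) v).
Proof.
rewrite bf_dr bf_dl big_distrl big_distrr /bf -sumrB; apply: eq_bigr => x _ /=.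
rewrite big_distrr big_distrr -sumrB; apply: eq_bigr => y _ /=.
ring.
Qed.

Lemma psd_schur (X : finType) (A : op C X) x0 : psd A -> A x0 x0 != 0 ->
  psd (fun x y => A x y - (A x0 x0)^-1 * (A x x0 * A x0 y)).
Proof.
move=> h a0 v; rewrite -/(bf _ v v) bf_rank1.
set a := A x0 x0; set c := bf A (delta x0) v.
have ra : a^* = a by apply: geC0_conj; apply: psd_diag.
have hp : bf A v (delta x0) = c^* by rewrite /c (bf_conj _ _ h).
have := h (fun z => v z + (- c / a) * delta x0 z); rewrite -/(bf A _ _).
rewrite !bfDl !bfDr !bfZl !bfZr bf_dd hp -/a -/c.
have hs : (- c / a)^* = - c^* / a.
  rewrite rmorphM rmorphN /= fmorphV /=. congr (_ * _^-1); exact: ra.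
rewrite hs => H; apply: le_trans H _; rewrite le_eqVlt; apply/orP; left; apply/eqP.
by field.
Qed.

Lemma psd_row0 (X : finType) (A : op C X) x0 y : psd A -> A x0 x0 = 0 -> A x0 y = 0.
Proof.
move=> h a0; apply/eqP; apply/negPn/negP => b0.
set b := A x0 y in b0.
have ry : (A y y)^* = A y y by apply: geC0_conj; apply: psd_diag.
have hb : A y x0 = b^* by rewrite (psd_herm _ _ h).
have b0' : b^* != 0 by rewrite conjC_eq0.
set c := - (A y y + 1) / b^*.
have := h (fun z => c * delta x0 z + delta y z); rewrite -/(bf A _ _).
rewrite !bfDl !bfDr !bfZl !bfZr !bf_dd a0 hb /c rmorphM rmorphN /= fmorphV rmorphD /= ry conjCK conjC1.
rewrite -/b => H.
have H2 : 0 <= - (A y y + 2).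
  apply: le_trans H _; rewrite le_eqVlt; apply/orP; left; apply/eqP.
  by field; rewrite b0 andbT conjC_eq0.
have H3 : 0 < A y y + 2 by apply: ltr_wpDl; [exact: psd_diag | rewrite ltr0n].
by move: H2; rewrite oppr_ge0 (lt_geF H3).
Qed.

Definition decomp_ok (X : finType) (A : op C X) (s : seq (C * (X -> C))) :=
  all (fun k => 0 <= k.1) s /\
  forall x y, A x y = \sum_(k <- s) k.1 * (k.2 x * (k.2 y)^*).

Lemma decomp_aux (X : finType) n : forall (S : {set X}) (A : op C X),
  (#|S| <= n)%N -> psd A -> (forall x y, x \notin S -> A x y = 0) ->
  exists s, decomp_ok A s.
Proof.
elim: n => [|n IH] S A hS h hsup.
  have S0 : S = set0 by apply: cards0_eq; move: hS; rewrite leqn0 => /eqP.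
  exists [::]; split => // x y; by rewrite big_nil hsup // S0 in_set0.
case: (set_0Vmem S) => [S1|[x0 x0S]].
  exists [::]; split => // x y; by rewrite big_nil hsup // S1 in_set0.
have hS' : (#|S :\ x0| <= n)%N.
  by move: hS; rewrite (cardsD1 x0) x0S add1n ltnS.
have supp' : forall x, x \notin S :\ x0 -> x = x0 \/ x \notin S.
  move=> x; rewrite in_setD1 negb_and negbK => /orP[/eqP->|]; by [left|right].
case a0: (A x0 x0 == 0).
  have r0 := psd_row0 (x0 := x0) _ h (eqP a0).
  apply: (IH (S :\ x0) A hS' h) => x y /supp' [->|/hsup]; by [apply: r0|apply].
set a := A x0 x0 in a0.
have ha : a != 0 by rewrite a0.
have hsB : forall x y, x \notin S :\ x0 -> A x y - a^-1 * (A x x0 * A x0 y) = 0.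
  move=> x y /supp' [->|xS].
    by rewrite -/a mulrA mulVf // mul1r subrr.
  by rewrite (hsup x y xS) (hsup x x0 xS) mul0r mulr0 subrr.
have [s' [hs1 hs2]] := IH (S :\ x0) (fun x y => A x y - a^-1 * (A x x0 * A x0 y))
   hS' (psd_schur h ha) hsB.
exists ((a^-1, fun x => A x x0) :: s'); split.
  by rewrite /= hs1 andbT invr_ge0 psd_diag.
move=> x y; rewrite big_cons -hs2 /=.
rewrite (psd_herm y x0 h).
ring.
Qed.

Lemma psd_decomp (X : finType) (A : op C X) : psd A -> exists s, decomp_ok A s.
Proof.
move=> h; apply: (@decomp_aux X #|[set: X]| setT) => // x y.
by rewrite in_setT.
Qed.

Lemma bf_suml (X I : finType) (A : op C X) (F : I -> X -> C) w :
  bf A (fun z => \sum_i F i z) w = \sum_i bf A (F i) w.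
Proof.
rewrite /bf [RHS]exchange_big /=; apply: eq_bigr => x _.
rewrite [RHS]exchange_big /=; apply: eq_bigr => y _.
by rewrite rmorph_sum !big_distrl.
Qed.

Lemma bf_sumr (X I : finType) (A : op C X) (F : I -> X -> C) u :
  bf A u (fun z => \sum_i F i z) = \sum_i bf A u (F i).
Proof.
rewrite /bf [RHS]exchange_big /=; apply: eq_bigr => x _.
rewrite [RHS]exchange_big /=; apply: eq_bigr => y _.
by rewrite big_distrr.
Qed.

Lemma psd_comp (X Y : finType) (Z : op C X) (f : Y -> X) :
  psd Z -> psd (fun a b => Z (f a) (f b)).
Proof.
move=> h v.
have := h (fun x => \sum_a v a * delta (f a) x); rewrite -/(bf Z _ _).
rewrite bf_suml.
under eq_bigr do rewrite bfZl bf_sumr big_distrr.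
under eq_bigr do under eq_bigr do rewrite bfZr bf_dd.
move=> H; apply: le_trans H _; rewrite le_eqVlt; apply/orP; left; apply/eqP.
apply: eq_bigr => a _; apply: eq_bigr => b _ /=.
ring.
Qed.

Lemma psd_contract (X I K : finType) (P : op C K) (g : X -> I -> K) :
  psd P -> psd (fun x y => \sum_i \sum_j P (g x i) (g y j)).
Proof.
move=> h v.
have := psd_comp (fun a : X * I => g a.1 a.2) h (fun a => v a.1).
move=> H; apply: le_trans H _; rewrite le_eqVlt; apply/orP; left; apply/eqP.
have E : \sum_x \sum_y (v x)^* * (\sum_i \sum_j P (g x i) (g y j)) * v y =
    \sum_x \sum_i \sum_y \sum_j (v x)^* * P (g x i) (g y j) * v y.
  apply: eq_bigr => x _; rewrite exchange_big; apply: eq_bigr => y _ /=.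
  rewrite big_distrr big_distrl /=; apply: eq_bigr => i _.
  rewrite big_distrr big_distrl /=; apply: eq_bigr => j _.
  by [].
rewrite E [RHS]pair_bigA /=; apply: eq_bigr => a _.
by rewrite [RHS]pair_bigA.
Qed.

Lemma bf_u (X Y : finType) (Z : op C X) (v : X * Y -> C) (w : Y -> C) :
  bf Z (fun x => \sum_y (w y)^* * v (x, y)) (fun x => \sum_y (w y)^* * v (x, y)) =
  \sum_y \sum_y' w y * (w y')^* * bf Z (fun x => v (x, y)) (fun x => v (x, y')).
Proof.
rewrite bf_suml; apply: eq_bigr => y _ /=.
rewrite (bfZl _ _ (fun x => v (x, y))) conjCK bf_sumr big_distrr; apply: eq_bigr => y' _ /=.
by rewrite (bfZr _ _ _ (fun x => v (x, y'))) mulrA.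
Qed.

Lemma sum_pair (X Y : finType) (G : X * Y -> C) :
  \sum_p G p = \sum_x \sum_y G (x, y).
Proof. by rewrite pair_bigA; apply: eq_bigr => -[x y]. Qed.

Lemma tensor_term (X Y : finType) (Z : op C X) (v : X * Y -> C) (c : C) (w : Y -> C) :
  \sum_a \sum_b (v a)^* * (Z a.1 b.1 * (c * (w a.2 * (w b.2)^*))) * v b =
  c * bf Z (fun x => \sum_y (w y)^* * v (x, y)) (fun x => \sum_y (w y)^* * v (x, y)).
Proof.
rewrite sum_pair.
under eq_bigr => x _ do under eq_bigr => y _ do rewrite sum_pair.
rewrite bf_u /bf big_distrr /= exchange_big /=; apply: eq_bigr => y _.
under eq_bigr => x _ do rewrite exchange_big /=.
rewrite exchange_big /= big_distrr /=; apply: eq_bigr => y' _.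
rewrite [RHS]mulrA big_distrr /=; apply: eq_bigr => x _.
rewrite big_distrr /=; apply: eq_bigr => x' _ /=.
ring.
Qed.

Lemma psd_tensor (X Y : finType) (Z : op C X) (W : op C Y) :
  psd Z -> psd W -> psd (fun a b : X * Y => Z a.1 b.1 * W a.2 b.2).
Proof.
move=> hZ hW v; have [s [hs1 hs2]] := psd_decomp hW.
have E : \sum_a \sum_b (v a)^* * (Z a.1 b.1 * W a.2 b.2) * v b =
     \sum_(k <- s) k.1 * bf Z (fun x => \sum_y (k.2 y)^* * v (x, y))
                          (fun x => \sum_y (k.2 y)^* * v (x, y)).
  under eq_bigr do under eq_bigr do rewrite hs2 !big_distrr big_distrl /=.
  under eq_bigr do rewrite exchange_big /=.
  rewrite exchange_big /=; apply: eq_bigr => k _.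
  by rewrite -tensor_term.
rewrite E.
elim: s hs1 {hs2 E} => [|k s IH] /=; first by rewrite big_nil.
move/andP=> [h1 h2]; rewrite big_cons; apply: addr_ge0; last exact: IH.
by apply: mulr_ge0 => //; apply: hZ.
Qed.

Lemma cp_pos (X Y : finType) (N : superop C X Y) (Z : op C X) :
  completely_positive N -> psd Z -> psd (N Z).
Proof.
move=> hN hZ.
have h1 := psd_comp (fun a : unit * X => a.2) hZ.
have h2 := hN unit _ h1.
exact: (psd_comp (fun x : Y => (tt, x)) h2).
Qed.

Lemma cp_mid (Ahi Bhi Aho Bho Am Bm : finType) (N : superop C (Ahi * Bhi)%type (Aho * Bho)%type) :
  completely_positive N -> completely_positive (mid_action (Am := Am) (Bm := Bm) N).
Proof.
move=> hN R Z hZ.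
pose f := fun a : (R * (Am * Bm)) * (Ahi * Bhi) =>
   (a.1.1, ((a.2.1, a.1.2.1), (a.2.2, a.1.2.2))).
have h1 := psd_comp f hZ.
have h2 := hN _ _ h1.
pose g := fun p : R * ((Aho * Am) * (Bho * Bm)) =>
   ((p.1, (p.2.1.2, p.2.2.2)), (p.2.1.1, p.2.2.1)).
exact: (psd_comp g h2).
Qed.

Lemma cp_SA (Ai Bi Ahi Bhi Am Bm Aho Bho Ao Bo : finType)
    (Pre : superop C (Ai * Bi)%type ((Ahi * Am) * (Bhi * Bm))%type)
    (Post : superop C ((Aho * Am) * (Bho * Bm))%type (Ao * Bo)%type)
    (M : superop C (Ahi * Bhi)%type (Aho * Bho)%type) :
  completely_positive Pre -> completely_positive Post -> completely_positive M ->
  completely_positive (superchannel_apply Pre Post M).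
Proof.
move=> h1 h2 h3 R Z hZ.
exact: (h2 _ _ (cp_mid h3 (h1 _ _ hZ))).
Qed.

Definition Omega (R : finType) : op C (R * R)%type :=
  fun a b => if (a.2 == a.1) && (b.2 == b.1) then 1 else 0.

Lemma psd_Omega (R : finType) : psd (@Omega R).
Proof.
move=> v.
have -> : \sum_a \sum_b (v a)^* * Omega a b * v b =
   (\sum_a (if a.2 == a.1 then v a else 0))^* * (\sum_b (if b.2 == b.1 then v b else 0)).
  rewrite rmorph_sum big_distrl; apply: eq_bigr => a _ /=.
  rewrite big_distrr; apply: eq_bigr => b _ /=.
  rewrite /Omega; case: (a.2 == a.1); case: (b.2 == b.1);
    by rewrite /= ?conjC0 ?mul0r ?mulr0 ?mulr1 ?mul0r.
by rewrite mulrC; apply: mul_conjC_ge0.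
Qed.

Lemma choi_psd (XA' XB' XA XB : finType) (N : superop C (XA' * XB')%type (XA * XB)%type) :
  completely_positive N -> psd (choi N).
Proof.
move=> hN.
have h2 := hN _ _ (@psd_Omega (XA' * XB')%type).
exact: (psd_comp (fun p : (XA' * XA) * (XB * XB') =>
   ((p.1.1, p.2.2), (p.1.2, p.2.1))) h2).
Qed.

Definition MQ (I O K : finType) (phi : I -> O -> K) (Q : op C K) : superop C I O :=
  fun X o o' => \sum_i \sum_j X i j * Q (phi i o) (phi j o').

Lemma cp_MQ (I O K : finType) (phi : I -> O -> K) (Q : op C K) :
  psd Q -> completely_positive (MQ phi Q).
Proof.
move=> hQ R Z hZ.
exact: (psd_contract (fun (p : R * O) (i : I) => ((p.1, i), phi i p.2)) (psd_tensor hZ hQ)).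
Qed.


Definition phiM (XA' XB' XA XB : finType) (i : (XA' * XB')%type) (o : (XA * XB)%type) :
  ((XA' * XA) * (XB * XB'))%type := ((i.1, o.1), (o.2, i.2)).

Definition Eop (X : finType) (i j : X) : op C X :=
  fun u v => if (u == i) && (v == j) then 1 else 0.

Lemma op_expand (X : finType) (A : op C X) :
  A = fun u v => \sum_(r : X * X) A r.1 r.2 * Eop r.1 r.2 u v.
Proof.
apply: functional_extensionality => u; apply: functional_extensionality => v.
rewrite sum_pair.
transitivity (\sum_i (if i == u then A u v else 0)); first by rewrite sum_delta.
apply: eq_bigr => i _; case: (eqVneq i u) => [->|ne].
  transitivity (\sum_j (if j == v then A u j else 0)); first by rewrite sum_delta.
  apply: eq_bigr => j _; rewrite /Eop eqxx /= [v == j]eq_sym.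
  by case: (j == v); rewrite ?mulr1 ?mulr0.
apply: esym; apply: big1 => j _; rewrite /Eop eq_sym (negbTE ne) /=.
by rewrite mulr0.
Qed.

Lemma lin0 (X Y : finType) (N : superop C X Y) :
  linear_superop N -> N (fun _ _ => 0) = fun _ _ => 0.
Proof.
move=> hN; have H := hN 1 (fun _ _ => 0) (fun _ _ => 0).
have E : (fun x y : X => 1 * (fun _ _ => 0 : C) x y + (fun _ _ => 0 : C) x y) = (fun _ _ => 0).
  by apply: functional_extensionality => x; apply: functional_extensionality => y; rewrite mulr0 addr0.
rewrite E in H.
apply: functional_extensionality => x; apply: functional_extensionality => y.
have e := f_equal (fun f => f x y) H; rewrite /= mul1r in e.
by apply: (addIr (N (fun _ _ => 0) x y)); rewrite add0r -e.
Qed.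

Lemma lin_sum (X Y I : finType) (N : superop C X Y) (c : I -> C) (F : I -> op C X) :
  linear_superop N ->
  N (fun u v => \sum_i c i * F i u v) = fun x y => \sum_i c i * N (F i) x y.
Proof.
move=> hN.
suff H : forall r : seq I, N (fun u v => \sum_(i <- r) c i * F i u v) =
           fun x y => \sum_(i <- r) c i * N (F i) x y by apply: H.
elim=> [|i r IH].
  have E : (fun u v : X => \sum_(i <- [::]) c i * F i u v) = (fun _ _ => 0).
    by apply: functional_extensionality => x; apply: functional_extensionality => y; rewrite big_nil.
  rewrite E lin0 //.
  by apply: functional_extensionality => x; apply: functional_extensionality => y; rewrite big_nil.
have E : (fun u v : X => \sum_(j <- i :: r) c j * F j u v) =
         (fun u v => c i * F i u v + (fun u v => \sum_(j <- r) c j * F j u v) u v).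
  by apply: functional_extensionality => x; apply: functional_extensionality => y; rewrite big_cons.
rewrite E hN IH.
by apply: functional_extensionality => x; apply: functional_extensionality => y; rewrite big_cons.
Qed.

Lemma choi_recon (XA' XB' XA XB : finType) (N : superop C (XA' * XB')%type (XA * XB)%type) :
  linear_superop N -> N = MQ (@phiM XA' XB' XA XB) (choi N).
Proof.
move=> hN; apply: functional_extensionality => X.
rewrite {1}(op_expand X) lin_sum //.
apply: functional_extensionality => -[o1 o2]; apply: functional_extensionality => -[o1' o2'].
rewrite /MQ sum_pair; apply: eq_bigr => -[i1 i2] _; apply: eq_bigr => -[j1 j2] _.
by [].
Qed.


Lemma ptB_invol (XA XB : finType) (A : op C (XA * XB)%type) : ptB (ptB A) = A.
Proof.
by apply: functional_extensionality => -[a b]; apply: functional_extensionality => -[c d].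
Qed.

Lemma ptB_choi (XA' XB' XA XB : finType) (N : superop C (XA' * XB')%type (XA * XB)%type) :
  ptB (choi N) = choi (fun Z => ptB (N (ptB Z))).
Proof.
apply: functional_extensionality => -[[p1 p2] [p3 p4]].
apply: functional_extensionality => -[[q1 q2] [q3 q4]].
rewrite /ptB /choi /=; congr (N _ _ _).
apply: functional_extensionality => -[u1 u2]; apply: functional_extensionality => -[v1 v2] /=.
rewrite !xpair_eqE.
by case: (u1 == p1); case: (u2 == q4); case: (v1 == q1); case: (v2 == p4).
Qed.

Lemma MQ_ptB (XA' XB' XA XB : finType) (X : op C ((XA' * XA) * (XB * XB'))%type) :
  (fun Z => ptB (MQ (@phiM XA' XB' XA XB) X (ptB Z))) = MQ (@phiM XA' XB' XA XB) (ptB X).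
Proof.
apply: functional_extensionality => Z.
apply: functional_extensionality => -[o1 o2]; apply: functional_extensionality => -[o1' o2'].
rewrite /ptB /MQ /= !pair_bigA /=.
pose h := fun r : (XA' * XB') * (XA' * XB') => ((r.1.1, r.2.2), (r.2.1, r.1.2)).
have hK : cancel h h by move=> [[a b] [c d]].
rewrite (reindex_inj (can_inj hK)) /=.
by apply: eq_bigr => -[[a b] [c d]] _.
Qed.

Lemma mid_ptB (Ahi Bhi Aho Bho Am Bm : finType) (N : superop C (Ahi * Bhi)%type (Aho * Bho)%type) :
  (fun W => ptB (mid_action (Am := Am) (Bm := Bm) N (ptB W))) =
  mid_action (fun Z => ptB (N (ptB Z))).
Proof. by []. Qed.

Definition PhiQ (Ai Bi Ahi Bhi Am Bm Aho Bho Ao Bo : finType)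
    (Pre : superop C (Ai * Bi)%type ((Ahi * Am) * (Bhi * Bm))%type)
    (Post : superop C ((Aho * Am) * (Bho * Bm))%type (Ao * Bo)%type)
    (Q : op C ((Ahi * Aho) * (Bho * Bhi))%type) :=
  choi (superchannel_apply Pre Post (MQ (@phiM Ahi Bhi Aho Bho) Q)).

Lemma Phi_psd (Ai Bi Ahi Bhi Am Bm Aho Bho Ao Bo : finType)
    (Pre : superop C (Ai * Bi)%type ((Ahi * Am) * (Bhi * Bm))%type)
    (Post : superop C ((Aho * Am) * (Bho * Bm))%type (Ao * Bo)%type)
    (Q : op C ((Ahi * Aho) * (Bho * Bhi))%type) :
  completely_positive Pre -> completely_positive Post -> psd Q ->
  psd (PhiQ Pre Post Q).
Proof.
move=> h1 h2 hQ; apply: choi_psd; apply: cp_SA => //; exact: cp_MQ.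
Qed.

Lemma Phi_ptB (Ai Bi Ahi Bhi Am Bm Aho Bho Ao Bo : finType)
    (Pre : superop C (Ai * Bi)%type ((Ahi * Am) * (Bhi * Bm))%type)
    (Post : superop C ((Aho * Am) * (Bho * Bm))%type (Ao * Bo)%type)
    (Q : op C ((Ahi * Aho) * (Bho * Bhi))%type) :
  ptB (PhiQ Pre Post Q) =
  PhiQ (fun Z => ptB (Pre (ptB Z))) (fun Z => ptB (Post (ptB Z))) (ptB Q).
Proof.
rewrite /PhiQ ptB_choi; congr (choi _).
apply: functional_extensionality => Z.
rewrite /superchannel_apply -MQ_ptB.
have -> : forall W, mid_action (Am := Am) (Bm := Bm)
     (fun Z0 => ptB (MQ (@phiM Ahi Bhi Aho Bho) Q (ptB Z0))) W
   = ptB (mid_action (MQ (@phiM Ahi Bhi Aho Bho) Q) (ptB W)).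
  by move=> W; rewrite -mid_ptB.
by rewrite !ptB_invol.
Qed.

Lemma Phi_ptB_psd (Ai Bi Ahi Bhi Am Bm Aho Bho Ao Bo : finType)
    (Pre : superop C (Ai * Bi)%type ((Ahi * Am) * (Bhi * Bm))%type)
    (Post : superop C ((Aho * Am) * (Bho * Bm))%type (Ao * Bo)%type)
    (Q : op C ((Ahi * Aho) * (Bho * Bhi))%type) :
  completely_PPT_preserving Pre -> completely_PPT_preserving Post -> psd (ptB Q) ->
  psd (ptB (PhiQ Pre Post Q)).
Proof.
move=> [_ h1] [_ h2] hQ; rewrite Phi_ptB; exact: Phi_psd.
Qed.

Lemma mid_MQ_lin (Ahi Bhi Aho Bho Am Bm : finType) a
    (Q1 Q2 : op C ((Ahi * Aho) * (Bho * Bhi))%type) W :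
  mid_action (Am := Am) (Bm := Bm) (MQ (@phiM Ahi Bhi Aho Bho) (fun x y => a * Q1 x y + Q2 x y)) W =
  fun x y => a * mid_action (MQ (@phiM Ahi Bhi Aho Bho) Q1) W x y +
             mid_action (MQ (@phiM Ahi Bhi Aho Bho) Q2) W x y.
Proof.
apply: functional_extensionality => x; apply: functional_extensionality => y.
rewrite /mid_action /MQ big_distrr -big_split; apply: eq_bigr => i _ /=.
rewrite big_distrr -big_split; apply: eq_bigr => j _ /=.
ring.
Qed.

Lemma Phi_lin (Ai Bi Ahi Bhi Am Bm Aho Bho Ao Bo : finType)
    (Pre : superop C (Ai * Bi)%type ((Ahi * Am) * (Bhi * Bm))%type)
    (Post : superop C ((Aho * Am) * (Bho * Bm))%type (Ao * Bo)%type) a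
    (Q1 Q2 : op C ((Ahi * Aho) * (Bho * Bhi))%type) :
  linear_superop Post ->
  PhiQ Pre Post (fun x y => a * Q1 x y + Q2 x y) =
  fun p q => a * PhiQ Pre Post Q1 p q + PhiQ Pre Post Q2 p q.
Proof.
move=> hP; apply: functional_extensionality => p; apply: functional_extensionality => q.
by rewrite /PhiQ /choi /superchannel_apply mid_MQ_lin hP.
Qed.


End Q.

Arguments Eop {C X}.
Section Q2.
Variable C : numClosedFieldType.
Definition fT (A B Am Bm : finType) (i : (A * B)%type) (m : (Am * Bm)%type) :
  ((A * Am) * (B * Bm))%type := ((i.1, m.1), (i.2, m.2)).

Lemma sum_fT (A B Am Bm : finType) (G : ((A * Am) * (B * Bm))%type -> C) :
  \sum_x G x = \sum_m \sum_i G (fT i m).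
Proof.
rewrite (reindex (fun y : (Am * Bm) * (A * B) => fT y.2 y.1)).
  by rewrite pair_bigA; apply: eq_bigr => -[m i] _.
apply: onW_bij.
exists (fun x : (A * Am) * (B * Bm) => ((x.1.2, x.2.2), (x.1.1, x.2.1))).
  by move=> [[a b] [c d]].
by move=> [[a b] [c d]].
Qed.

Lemma trAB_choi (XA' XB' XA XB : finType) (N : superop C (XA' * XB')%type (XA * XB)%type)
   p1 p2 q1 q2 :
  trAB (choi N) (p1, p2) (q1, q2) = trace (N (Eop (p1, p2) (q1, q2))).
Proof.
rewrite /trAB /trace sum_pair; apply: eq_bigr => a _; by apply: eq_bigr => b _.
Qed.

Lemma trace_Eop (X : finType) (p q : X) : trace (Eop (C:=C) p q) = if p == q then 1 else 0.
Proof.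
rewrite /trace /Eop; case: (eqVneq p q) => [<-|ne].
  transitivity (\sum_u (if u == p then (fun _ => 1 : C) u else 0)).
    by apply: eq_bigr => u _; rewrite andbb.
  by rewrite sum_delta.
apply: big1 => u _; case: (eqVneq u p) => [->|] //=.
by rewrite (negbTE ne).
Qed.
Lemma trace_t (Ahi Bhi Am Bm : finType) (t : C) (W : op C ((Ahi * Am) * (Bhi * Bm))%type) :
  t * trace W = \sum_m \sum_i \sum_j W (fT i m) (fT j m) * scal_id t i j.
Proof.
rewrite /trace sum_fT big_distrr; apply: eq_bigr => m _ /=.
rewrite big_distrr; apply: eq_bigr => i _ /=.
rewrite (bigD1 i) // big1 /=; first by rewrite addr0 /scal_id eqxx mulrC.
by move=> j ji; rewrite /scal_id eq_sym (negbTE ji) mulr0.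
Qed.


Lemma trace_mid (Ahi Bhi Aho Bho Am Bm : finType) (Q : op C ((Ahi * Aho) * (Bho * Bhi))%type)
   (W : op C ((Ahi * Am) * (Bhi * Bm))%type) :
  trace (mid_action (MQ (@phiM Ahi Bhi Aho Bho) Q) W) =
  \sum_m \sum_i \sum_j W (fT i m) (fT j m) * trAB Q i j.
Proof.
rewrite /trace sum_fT; apply: eq_bigr => m _.
rewrite sum_pair /mid_action /MQ.
under eq_bigr => a _ do rewrite exchange_big.
under eq_bigr => a _ do under eq_bigr => i _ do rewrite exchange_big.
rewrite exchange_big; apply: eq_bigr => i _.
rewrite exchange_big; apply: eq_bigr => j _.
rewrite /trAB big_distrr; apply: eq_bigr => a _.
rewrite big_distrr; apply: eq_bigr => b _.
reflexivity.
Qed.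

Lemma psd_rank1 (X : finType) (v : X -> C) : psd (fun u u' => (v u)^* * v u').
Proof.
move=> w.
have -> : \sum_u \sum_u' (w u)^* * ((v u)^* * v u') * w u' =
   (\sum_u v u * w u)^* * (\sum_u' v u' * w u').
  rewrite rmorph_sum big_distrl; apply: eq_bigr => u _.
  rewrite big_distrr; apply: eq_bigr => u' _ /=.
  rewrite /= rmorphM /=; ring.
by rewrite mulrC; apply: mul_conjC_ge0.
Qed.

Lemma Hm_sum (Ahi Bhi Am Bm I : finType) (D : op C (Ahi * Bhi)%type) (c : I -> C)
   (F : I -> op C ((Ahi * Am) * (Bhi * Bm))%type) :
  \sum_(m : Am * Bm) \sum_i \sum_j (\sum_r c r * F r (fT i m) (fT j m)) * D i j =
  \sum_r c r * \sum_(m : Am * Bm) \sum_i \sum_j F r (fT i m) (fT j m) * D i j.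
Proof.
under [RHS]eq_bigr => r _ do rewrite big_distrr.
rewrite [RHS]exchange_big; apply: eq_bigr => m _.
under [RHS]eq_bigr => r _ do rewrite big_distrr.
rewrite [RHS]exchange_big; apply: eq_bigr => i _.
under [RHS]eq_bigr => r _ do rewrite big_distrr.
rewrite [RHS]exchange_big; apply: eq_bigr => j _.
rewrite big_distrl; apply: eq_bigr => r _.
by rewrite /= mulrA.
Qed.

Lemma trace_part (Ai Bi Ahi Bhi Am Bm Aho Bho Ao Bo : finType)
    (Pre : superop C (Ai * Bi)%type ((Ahi * Am) * (Bhi * Bm))%type)
    (Post : superop C ((Aho * Am) * (Bho * Bm))%type (Ao * Bo)%type)
    (Q : op C ((Ahi * Aho) * (Bho * Bhi))%type) t :
  linear_superop Pre -> trace_preserving Pre -> completely_positive Pre ->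
  trace_preserving Post ->
  psd (fun x y => scal_id t x y - trAB Q x y) ->
  psd (fun x y => scal_id t x y - trAB (PhiQ Pre Post Q) x y).
Proof.
move=> hlin htp hcp hPtp hD.
pose D := fun i j => scal_id t i j - trAB Q i j.
pose Hm (W : op C ((Ahi * Am) * (Bhi * Bm))%type) :=
  \sum_(m : Am * Bm) \sum_i \sum_j W (fT i m) (fT j m) * D i j.
have HmE : forall W, Hm W = t * trace W - trace (mid_action (MQ (@phiM Ahi Bhi Aho Bho) Q) W).
  move=> W; rewrite trace_t trace_mid -sumrB; apply: eq_bigr => m _.
  rewrite -sumrB; apply: eq_bigr => i _.
  rewrite -sumrB; apply: eq_bigr => j _.
  by rewrite /D mulrBr.
have step1 : forall p q, scal_id t p q - trAB (PhiQ Pre Post Q) p q = Hm (Pre (Eop p q)).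
  move=> [p1 p2] [q1 q2]; rewrite HmE /PhiQ trAB_choi /superchannel_apply hPtp htp trace_Eop.
  by rewrite /scal_id; case: (_ == _); rewrite ?mulr1 ?mulr0.
have Hm_pos : forall W, psd W -> 0 <= Hm W.
  move=> W hW; apply: sumr_ge0 => m _.
  exact: (psd_diag m (psd_contract (fun (m : Am * Bm) (i : Ahi * Bhi) => (fT i m, i))
            (psd_tensor hW hD))).
move=> v.
pose V := fun u u' => (v u)^* * v u'.
have E : \sum_p \sum_q (v p)^* * (scal_id t p q - trAB (PhiQ Pre Post Q) p q) * v q =
         Hm (Pre V).
  under eq_bigr => p _ do under eq_bigr => q _ do rewrite step1.
  rewrite (op_expand V) lin_sum // /Hm (Hm_sum D (fun r => V r.1 r.2) (fun r => Pre (Eop r.1 r.2))) [RHS]sum_pair.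
  apply: eq_bigr => p _; apply: eq_bigr => q _.
  rewrite /V /=; ring.
rewrite E; apply: Hm_pos; apply: cp_pos => //; exact: psd_rank1.
Qed.
End Q2.

Lemma psd_ext (C : numClosedFieldType) (X : finType) (A B : op C X) :
  (forall x y, A x y = B x y) -> psd A -> psd B.
Proof.
move=> e; have -> // : A = B.
by apply: functional_extensionality => x; apply: functional_extensionality => y.
Qed.

Theorem mainTheorem10 (C : numClosedFieldType)
    (Ai Bi Ahi Bhi Am Bm Aho Bho Ao Bo : finType)
    (M : superop C (Ahi * Bhi)%type (Aho * Bho)%type)
    (Pre : superop C (Ai * Bi)%type ((Ahi * Am) * (Bhi * Bm))%type)
    (Post : superop C ((Aho * Am) * (Bho * Bm))%type (Ao * Bo)%type) :
  channel M ->
  completely_PPT_preserving Pre ->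
  completely_PPT_preserving Post ->
  Gamma_kappa_ge M (superchannel_apply Pre Post M).
Proof.
move=> [hMl hMcp hMtp] hPre hPost.
have hPre' := hPre; have hPost' := hPost.
case: hPre => [[hPrel hPrecp hPretp] hPrep].
case: hPost => [[hPostl hPostcp hPosttp] hPostp].
move=> r hr t [Q [[hQ hlo hup] htr]].
apply: hr.
exists (PhiQ Pre Post Q); split; last exact: trace_part.
have eM : superchannel_apply Pre Post M =
          superchannel_apply Pre Post (MQ (@phiM Ahi Bhi Aho Bho) (choi M)).
  by rewrite -(choi_recon hMl).
rewrite /kappa_feasible eM -/(PhiQ Pre Post (choi M)).
move: hlo hup; set J := choi M => hlo hup.
split.
- exact: Phi_psd.
- have H1 : psd (ptB (fun x y => 1 * J x y + Q x y)).
    apply: psd_ext hlo => x y; rewrite /ptB /opp_op; ring.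
  have H2 := Phi_ptB_psd hPre' hPost' H1.
  rewrite Phi_lin // in H2.
  apply: psd_ext H2 => x y; rewrite /ptB /opp_op; ring.
- have H1 : psd (ptB (fun x y => -1 * J x y + Q x y)).
    apply: psd_ext hup => x y; rewrite /ptB; ring.
  have H2 := Phi_ptB_psd hPre' hPost' H1.
  rewrite Phi_lin // in H2.
  apply: psd_ext H2 => x y; rewrite /ptB; ring.
Qed.
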